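(* Let $m\in\mathbb{N}$, let $H$ be a finite field and let $\mathbb{F}$ be an extension field of $H$ of degree $[\mathbb{F}:H]=m$. Let $h_1,\dots,h_m\in H^m$ and $t_1,\dots,t_m\in\mathbb{F}$ be chosen independently and uniformly at random. Then for every set $A\subseteq\mathbb{F}^m$ with $|A|=\alpha\,|\mathbb{F}|^m$, \[ \Pr\Big[\sum_{i=1}^m t_i\, h_i\in A\Big]\le \alpha+\frac{2}{|H|}. \]
   Context: Here $H^m\subseteq\mathbb{F}^m$ via the inclusion $H\subseteq\mathbb{F}$, and $t_i h_i$ denotes scalar multiplication of the vector $h_i$ by $t_i\in\mathbb{F}$. *)

(* Defs.v *)
From HB Require Import structures.
From mathcomp Require Import all_boot all_order all_algebra all_field.
Set Implicit Arguments. Unset Strict Implicit. Unset Printing Implicit Defensive.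
Import GRing.Theory Num.Theory.
Local Open Scope ring_scope.

Definition embed_vec (H : finFieldType) (F : fieldExtType H) (m : nat)
  (v : 'rV[H]_m) : 'rV[F]_m := map_mx (fun c : H => c%:A) v.

Definition rand_comb (H : finFieldType) (F : fieldExtType H) (m : nat)
  (h : {ffun 'I_m -> 'rV[H]_m}) (t : {ffun 'I_m -> finvect_type F})
  : 'rV[finvect_type F]_m :=
  \sum_(i < m) (t i : F) *: embed_vec F (h i).

(* Main.v *)
From HB Require Import structures.
From mathcomp Require Import all_boot all_order all_algebra all_field.
From mathcomp Require Import ring lra.
Require Import Defs.
Import Order.TTheory GRing.Theory Num.Theory.
Local Open Scope ring_scope.

Lemma sum_bound (x : rat) n : 0 <= x -> 2*x <= 1 ->
  \sum_(1 <= i < n.+1) x^+i <= 2*x - 2*x^+n.+1.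
Proof.
move=> x0 x2; elim: n => [|n IH]; first by rewrite big_geq // expr1 subrr.
rewrite big_nat_recr //= [x ^+ n.+2]exprS.
have h : 0 <= x ^+ n.+1 by apply: exprn_ge0.
move: IH h; set b := x ^+ n.+1; set S := \sum_(_ <= _ < _) _ => IH h.
nra.
Qed.

Lemma prod_bound (x : rat) n : 0 <= x -> x <= 1 ->
  1 - \sum_(1 <= i < n.+1) x^+i <= \prod_(1 <= i < n.+1) (1 - x^+i).
Proof.
move=> x0 x1; elim: n => [|n IH]; first by rewrite !big_geq // subr0.
rewrite [\sum_(_ <= _ < n.+2) _]big_nat_recr //= [\prod_(_ <= _ < n.+2) _]big_nat_recr //=.
have h : 0 <= x ^+ n.+1 by apply: exprn_ge0.
have h1 : x ^+ n.+1 <= 1 by apply: exprn_ile1.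
have hS : 0 <= \sum_(1 <= i < n.+1) x^+i by apply: sumr_ge0 => i _; apply: exprn_ge0.
move: IH h h1 hS; set b := x ^+ n.+1; set S := \sum_(_ <= _ < _) _;
  set P := \prod_(_ <= _ < _) _ => IH h h1 hS.
nra.
Qed.

Lemma unit_count (q : nat) m : (0 < q)%N ->
  ((q ^ 'C(m, 2) * \prod_(1 <= i < m.+1) (q ^ i - 1))%N%:R : rat)
  = (q%:R : rat) ^+ (m * m) * \prod_(1 <= i < m.+1) (1 - (q%:R)^-1 ^+ i).
Proof.
move=> q0; have qn0 : (q%:R : rat) != 0 by rewrite pnatr_eq0 -lt0n.
elim: m => [|m IH]; first by rewrite !big_geq.
rewrite [\prod_(_ <= _ < m.+2) (_ - _)%N]big_nat_recr //= [\prod_(_ <= _ < m.+2) (_ - _)]big_nat_recr //= (binS m 1) bin1.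
move: IH; rewrite !natrM => IH.
rewrite expnD !natrM.
set A := ((q ^ 'C(m, 2))%N%:R : rat); set B := ((\prod_(_ <= _ < _) _)%N%:R : rat).
have -> : A * (q ^ m)%:R * (B * (q ^ m.+1 - 1)%:R) = (A * B) * ((q ^ m)%:R * (q ^ m.+1 - 1)%:R) by ring.
rewrite IH natrB ?expn_gt0 ?q0 // !natrX.
have -> : (m.+1 * m.+1 = m * m + m + m.+1)%N by ring.
rewrite !exprD exprVn.
set Q := (q%:R : rat); set P := \prod_(_ <= _ < _) _.
field; rewrite expf_neq0 //.
Qed.

Lemma nonunit_bound (H : finFieldType) m :
  (#|[set M : 'M[H]_m | M \notin unitmx]|%:R : rat) <=
    2 * (#|H| ^ (m * m))%:R / #|H|%:R.
Proof.
have q1 : (1 < #|H|)%N := card_finNzRing_gt1 H.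
have q0 : (0 < #|H|)%N by apply: ltnW.
have qp : (0 : rat) < #|H|%:R by rewrite ltr0n.
case: m => [|m].
  rewrite (_ : [set M : 'M[H]_0 | M \notin unitmx] = set0) ?cards0.
    by apply: divr_ge0 => //; apply: mulr_ge0.
  by apply/setP => M; rewrite !inE unitmxE det_mx00 unitr1.
set n := m.+1.
have hU : #|[set M : 'M[H]_n | M \in unitmx]| =
   (#|H| ^ 'C(n, 2) * \prod_(1 <= i < n.+1) (#|H| ^ i - 1))%N.
  rewrite -card_GL //; rewrite cardsT /= card_sub; apply: eq_card => M.
  by rewrite !inE.
have hC : #|[set M : 'M[H]_n | M \notin unitmx]| =
    (#|H| ^ (n * n) - #|[set M : 'M[H]_n | M \in unitmx]|)%N.
  have := cardsC [set M : 'M[H]_n | M \in unitmx]; rewrite card_mx => <-.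
  rewrite addKn.
  by apply: eq_card => M; rewrite !inE.
rewrite hC natrB; last by rewrite -card_mx max_card.
rewrite hU unit_count //.
set x := (#|H|%:R : rat)^-1.
have x0 : 0 <= x by rewrite /x invr_ge0 ltW.
have x1 : x <= 1 by rewrite /x invf_le1 // ler1n ltnW.
have x2 : 2 * x <= 1.
  have qx : x * #|H|%:R = 1 by rewrite /x mulVf // gt_eqF.
  have q2 : (2 : rat) <= #|H|%:R by rewrite ler_nat.
  nra.
have Pb := prod_bound x n x0 x1.
have Sb := sum_bound x n x0 x2.
have Np : (0 : rat) <= (#|H| ^ (n * n))%:R by [].
rewrite natrX; move: Np; rewrite natrX.
move=> Np.
move: Np Pb Sb.
set N := (#|H|%:R ^+ (n * n) : rat); set P := \prod_(_ <= _ < _) _; set S := \sum_(_ <= _ < _) _.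
move=> Np Pb Sb.
have hx : 0 <= x ^+ n.+1 by apply: exprn_ge0.
nra.
Qed.

Section Main.
Variables (m : nat) (H : finFieldType) (F : fieldExtType H).

Definition Mh (h : {ffun 'I_m -> 'rV[H]_m}) : 'M[H]_m := \matrix_(i, j) h i 0 j.

Lemma comb_mul h (t : {ffun 'I_m -> finvect_type F}) :
  rand_comb h t = (\row_i (t i : F)) *m map_mx (in_alg F) (Mh h).
Proof.
rewrite mulmx_sum_row /rand_comb; apply: eq_bigr => i _; rewrite mxE.
by congr (_ *: _); apply/rowP => j; rewrite !mxE.
Qed.

Lemma comb_inj h : Mh h \in unitmx -> injective (@rand_comb H F m h).
Proof.
move=> U t t'; rewrite !comb_mul => E.
have U' : map_mx (in_alg F) (Mh h) \in unitmx by rewrite map_unitmx.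
have := congr1 (mulmx^~ (invmx (map_mx (in_alg F) (Mh h)))) E.
rewrite !mulmxK // => /rowP E'.
by apply/ffunP => i; have := E' i; rewrite !mxE.
Qed.

End Main.
Arguments Mh {m H}.

Lemma count_split (m : nat) (H : finFieldType) (F : fieldExtType H)
  (A : {set 'rV[finvect_type F]_m}) :
  #|[set w : ({ffun 'I_m -> 'rV[H]_m} * {ffun 'I_m -> finvect_type F})%type
        | rand_comb w.1 w.2 \in A]| =
  (\sum_(h : {ffun 'I_m -> 'rV[H]_m})
     #|[set t : {ffun 'I_m -> finvect_type F} | rand_comb h t \in A]|)%N.
Proof.
transitivity (\sum_(w : ({ffun 'I_m -> 'rV[H]_m} * {ffun 'I_m -> finvect_type F})%type)
   (rand_comb w.1 w.2 \in A : nat))%N.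
  rewrite -sum1_card big_mkcond /=. apply: eq_big => // w _; rewrite inE.
  by case: ifP.
rewrite -(pair_bigA _ (fun h t => (rand_comb h t \in A : nat))) /=.
apply: eq_big => // h _; rewrite -sum1_card [in RHS]big_mkcond /=; apply: eq_big => // t _.
by rewrite inE; case: ifP.
Qed.

Lemma count_bound (m : nat) (H : finFieldType) (F : fieldExtType H)
  (A : {set 'rV[finvect_type F]_m}) :
  (#|[set w : ({ffun 'I_m -> 'rV[H]_m} * {ffun 'I_m -> finvect_type F})%type
        | rand_comb w.1 w.2 \in A]| <=
  #|{ffun 'I_m -> 'rV[H]_m}| * #|A| +
  #|[set M : 'M[H]_m | M \notin unitmx]| * #|{ffun 'I_m -> finvect_type F}|)%N.
Proof.
rewrite count_split.
have -> : #|[set M : 'M[H]_m | M \notin unitmx]| =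
          #|[set h : {ffun 'I_m -> 'rV[H]_m} | Mh h \notin unitmx]|.
  rewrite -(@on_card_preimset _ _ (@Mh m H) [set M : 'M[H]_m | M \notin unitmx]).
    by apply: eq_card => h; rewrite !inE.
  exists (fun M : 'M[H]_m => [ffun i => row i M]) => [h _ | M _].
    by apply/ffunP => i; apply/rowP => j; rewrite ffunE !mxE.
  by apply/matrixP => i j; rewrite !mxE ffunE mxE.
have Hb : forall h : {ffun 'I_m -> 'rV[H]_m},
    (#|[set t : {ffun 'I_m -> finvect_type F} | rand_comb h t \in A]| <=
     #|A| + (Mh h \notin unitmx) * #|{ffun 'I_m -> finvect_type F}|)%N.
  move=> h; case: (boolP (Mh h \in unitmx)) => U /=.
    rewrite mul0n addn0 -(card_imset _ (@comb_inj m H F h U)).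
    apply: subset_leq_card; apply/subsetP => y /imsetP [t].
    by rewrite inE => Ht ->.
  rewrite mul1n. have X := leq_addl #|A| #|{ffun 'I_m -> finvect_type F}|. have Y := max_card (mem [set t : {ffun 'I_m -> finvect_type F} | rand_comb h t \in A]). exact (leq_trans Y X).
apply: leq_trans; first by apply: leq_sum => h _; exact: Hb.
rewrite big_split /= sum_nat_const -big_distrl /=.
rewrite leq_add ?leq_mul // ?cardT //.
rewrite -sum1_card [in X in (_ <= X)%N]big_mkcond /=.
apply: eq_leq; apply: eq_big => // h _; rewrite inE; by case: (Mh h \in unitmx).
Qed.

Theorem mainTheorem3 (m : nat) (H : finFieldType) (F : fieldExtType H)
  (hdeg : \dim {:F} = m) (A : {set 'rV[finvect_type F]_m}) :
  let alpha : rat := #|A|%:R / (#|finvect_type F| ^ m)%:R in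
  (#|[set w : ({ffun 'I_m -> 'rV[H]_m} * {ffun 'I_m -> finvect_type F})%type
        | rand_comb w.1 w.2 \in A]|%:R
     / #|[set: ({ffun 'I_m -> 'rV[H]_m} * {ffun 'I_m -> finvect_type F})%type]|%:R
     : rat)
    <= alpha + 2 / #|H|%:R.
Proof.
cbv zeta.
have Hc := count_bound m H F A.
have Hn := nonunit_bound H m.
have N1E : #|{ffun 'I_m -> 'rV[H]_m}| = (#|H| ^ (m * m))%N.
  by rewrite card_ffun card_mx card_ord mul1n -expnM.
have N2E : #|{ffun 'I_m -> finvect_type F}| = (#|finvect_type F| ^ m)%N.
  by rewrite card_ffun card_ord.
rewrite cardsT card_prod N1E N2E.
rewrite N1E N2E in Hc.
have q1 : (1 < #|H|)%N := card_finNzRing_gt1 H.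
have K1 : (0 < #|finvect_type F|)%N by apply/card_gt0P; exists 0.
have qp : (0 : rat) < #|H|%:R by rewrite ltr0n ltnW.
have Kp : (0 : rat) < (#|finvect_type F| ^ m)%:R by rewrite ltr0n expn_gt0 K1.
have Np : (0 : rat) < (#|H| ^ (m * m))%:R by rewrite ltr0n expn_gt0 ltnW.
rewrite natrM ler_pdivrMr; last by rewrite mulr_gt0.
move: Hc; rewrite -(ler_nat rat) natrD !natrM => Hc.
apply: le_trans Hc _.
set a := (#|A|%:R : rat); set N1 := ((#|H| ^ (m * m))%:R : rat) in Np Hn *.
set N2 := ((#|finvect_type F| ^ m)%:R : rat) in Kp *.
set q := (#|H|%:R : rat) in qp Hn *.
set Ns := (#|[set M : 'M[H]_m | M \notin unitmx]|%:R : rat) in Hn *.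
have -> : (a / N2 + 2 / q) * (N1 * N2) = N1 * a + (2 * N1 / q) * N2.
  by field; rewrite ?gt_eqF.
by rewrite lerD2l ler_wpM2r // ltW.
Qed.
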